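(* Let $\lambda>1$, $E\in\mathbb{R}$, $v:\mathbb{T}\to\mathbb{R}$, $\omega\in\mathbb{R}$ and $\theta_0\in\mathbb{T}$. Let $s_0<r_0$ be such that the fibre orbits $r_{k+1}=\lambda^2v(\theta_k)-E-1/r_k$, $s_{k+1}=\lambda^2v(\theta_k)-E-1/s_k$ (with $\theta_k=\theta_0+k\omega$) satisfy $r_k,s_k\in B$ for all $k\ge0$. If $r_0-s_0\ge\lambda^{-7}$, then for every integer $t>0$, $$\frac{|\{0\le j<t:r_j\in B^s\}|}{t}\le\frac23+\frac{3}{2t}.$$
   Context: $B=[\lambda^{-2},\lambda^2]$, $B^s=[\lambda^{-2},\lambda^{-1}]$. *)

(* Defs.v *)
From Stdlib Require Import Reals Lra List.
Open Scope R_scope.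

Definition inB (lam x : R) : Prop := / (lam ^ 2) <= x <= lam ^ 2.

Definition inBs (lam x : R) : Prop := / (lam ^ 2) <= x <= / lam.

Definition inBs_dec (lam x : R) : bool :=
  if Rle_dec (/ (lam ^ 2)) x then
    if Rle_dec x (/ lam) then true else false
  else false.

Definition countBs (lam : R) (r : nat -> R) (t : nat) : nat :=
  length (filter (fun j => inBs_dec lam (r j)) (seq 0 t)).

Definition fibre_orbit (lam E : R) (v : R -> R) (omega theta0 : R) (x : nat -> R) : Prop :=
  forall k : nat, x (S k) = lam ^ 2 * v (theta0 + INR k * omega) - E - / x k.

(* Main.v *)
Require Import Defs.
From Stdlib Require Import Reals Lra Lia List.
Open Scope R_scope.

Lemma countBs_S lam r t : countBs lam r (S t) =
  (countBs lam r t + (if inBs_dec lam (r t) then 1 else 0))%nat.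
Proof.
  unfold countBs. rewrite seq_S, filter_app, length_app. simpl.
  destruct (inBs_dec lam (r t)); simpl; lia.
Qed.

Lemma countBs_le lam r t : (countBs lam r t <= t)%nat.
Proof.
  induction t; [unfold countBs; simpl; lia|]. rewrite countBs_S.
  destruct (inBs_dec lam (r t)); lia.
Qed.

Theorem lemmaB5 (lam E : R) (v : R -> R) (omega theta0 : R) (r s : nat -> R)
  (Hlam : 1 < lam)
  (Hv_per : forall x : R, v (x + 1) = v x)
  (Hr : fibre_orbit lam E v omega theta0 r)
  (Hs : fibre_orbit lam E v omega theta0 s)
  (HrB : forall k : nat, inB lam (r k))
  (HsB : forall k : nat, inB lam (s k))
  (Hsr : s 0%nat < r 0%nat)
  (Hgap : r 0%nat - s 0%nat >= / (lam ^ 7)) :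
  forall t : nat, (0 < t)%nat ->
    INR (countBs lam r t) / INR t <= 2 / 3 + 3 / (2 * INR t).
Proof.
  assert (Hl0 : 0 < lam) by lra.
  assert (Hl2 : 0 < lam ^ 2) by (apply pow_lt; lra).
  assert (Hl7 : 0 < lam ^ 7) by (apply pow_lt; lra).
  assert (Hi2 : 0 < / lam ^ 2) by (apply Rinv_0_lt_compat; lra).
  assert (Hpos : forall k, 0 < r k /\ 0 < s k).
  { intro k; destruct (HrB k), (HsB k); split; lra. }
  assert (Hstep : forall k, (r (S k) - s (S k)) * (r k * s k) = r k - s k).
  { intro k. rewrite Hr, Hs. destruct (Hpos k). field. split; lra. }
  assert (Hinv : forall t, 0 < r t - s t /\
     (lam ^ 2) ^ (countBs lam r t) <=
       (r t - s t) * lam ^ 7 * (lam ^ 4) ^ (t - countBs lam r t)).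
  { induction t.
    - unfold countBs; simpl. split; [lra|].
      assert (lam ^ 7 * / lam ^ 7 = 1) by (field; lra).
      assert ((r 0%nat - s 0%nat) * lam ^ 7 >= / lam ^ 7 * lam ^ 7) by
        (apply Rmult_ge_compat_r; lra).
      rewrite Rinv_l in H0 by lra. lra.
    - destruct IHt as [Hd Hi].
      pose proof (Hstep t) as Hst. destruct (Hpos t) as [Hrp Hsp].
      assert (Hrs : 0 < r t * s t) by nra.
      assert (Hd' : 0 < r (S t) - s (S t)) by nra.
      split; [exact Hd'|].
      pose proof (countBs_le lam r t) as Hle.
      rewrite countBs_S.
      assert (Hm : 0 < (lam ^ 4) ^ (t - countBs lam r t)) by
        (apply pow_lt; apply pow_lt; lra).
      unfold inBs_dec. destruct (Rle_dec (/ lam ^ 2) (r t)) as [h1|h1];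
        [destruct (Rle_dec (r t) (/ lam)) as [h2|h2]|].
      + replace (S t - (countBs lam r t + 1))%nat with (t - countBs lam r t)%nat by lia.
        rewrite pow_add, pow_1.
        assert (Hrs2 : r t * s t * lam ^ 2 <= 1).
        { assert (r t * s t <= / lam * / lam).
          { assert (s t <= r t) by lra.
            assert (0 < / lam) by (apply Rinv_0_lt_compat; lra). nra. }
          assert (/ lam * / lam * lam ^ 2 = 1) by (field; lra). nra. }
        assert ((r t - s t) * lam ^ 2 <= r (S t) - s (S t)) by nra.
        assert ((lam ^ 2) ^ countBs lam r t * lam ^ 2 <=
          (r t - s t) * lam ^ 7 * (lam ^ 4) ^ (t - countBs lam r t) * lam ^ 2)
          by (apply Rmult_le_compat_r; lra).
        assert ((r t - s t) * lam ^ 2 * (lam ^ 7 * (lam ^ 4) ^ (t - countBs lam r t)) <=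
          (r (S t) - s (S t)) * (lam ^ 7 * (lam ^ 4) ^ (t - countBs lam r t)))
          by (apply Rmult_le_compat_r; nra).
        nra.
      + replace (S t - (countBs lam r t + 0))%nat with (S (t - countBs lam r t))%nat by lia.
        rewrite Nat.add_0_r, <- (tech_pow_Rmult (lam^4) (t - countBs lam r t)).
        assert (r t * s t <= lam ^ 2 * lam ^ 2).
        { destruct (HrB t), (HsB t). apply Rmult_le_compat; lra. }
        assert (r t - s t <= (r (S t) - s (S t)) * lam ^ 4).
        { replace (lam ^ 4) with (lam ^ 2 * lam ^ 2) by ring. nra. }
        assert ((r t - s t) * (lam ^ 7 * (lam ^ 4) ^ (t - countBs lam r t)) <=
          (r (S t) - s (S t)) * lam ^ 4 * (lam ^ 7 * (lam ^ 4) ^ (t - countBs lam r t)))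
          by (apply Rmult_le_compat_r; nra).
        nra.
      + replace (S t - (countBs lam r t + 0))%nat with (S (t - countBs lam r t))%nat by lia.
        rewrite Nat.add_0_r, <- (tech_pow_Rmult (lam^4) (t - countBs lam r t)).
        assert (r t * s t <= lam ^ 2 * lam ^ 2).
        { destruct (HrB t), (HsB t). apply Rmult_le_compat; lra. }
        assert (r t - s t <= (r (S t) - s (S t)) * lam ^ 4).
        { replace (lam ^ 4) with (lam ^ 2 * lam ^ 2) by ring. nra. }
        assert ((r t - s t) * (lam ^ 7 * (lam ^ 4) ^ (t - countBs lam r t)) <=
          (r (S t) - s (S t)) * lam ^ 4 * (lam ^ 7 * (lam ^ 4) ^ (t - countBs lam r t)))
          by (apply Rmult_le_compat_r; nra).
        nra. }
  intros t Ht.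
  destruct (Hinv t) as [Hd Hi].
  set (n := countBs lam r t) in *.
  pose proof (countBs_le lam r t) as Hle. fold n in Hle.
  assert (Hdl : r t - s t < lam ^ 2).
  { destruct (HrB t), (HsB t). lra. }
  assert (Hm : 0 < (lam ^ 4) ^ (t - n)) by (apply pow_lt; apply pow_lt; lra).
  assert (Hlt : (lam ^ 2) ^ n < lam ^ 2 * lam ^ 7 * (lam ^ 4) ^ (t - n)).
  { assert ((r t - s t) * (lam ^ 7 * (lam ^ 4) ^ (t - n)) <
      lam ^ 2 * (lam ^ 7 * (lam ^ 4) ^ (t - n))) by
      (apply Rmult_lt_compat_r; [nra|lra]). nra. }
  rewrite <- !pow_mult, <- !pow_add in Hlt.
  assert (Hn : (2 * n < 2 + 7 + 4 * (t - n))%nat).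
  { destruct (Nat.lt_ge_cases (2 * n) (2 + 7 + 4 * (t - n))) as [h|h]; [exact h|].
    exfalso. pose proof (Rle_pow lam _ _ ltac:(lra) h). 
    lra. }
  assert (Hn2 : (6 * n <= 8 + 4 * t)%nat) by lia.
  apply le_INR in Hn2. rewrite mult_INR, plus_INR, mult_INR in Hn2. simpl INR in Hn2.
  assert (Ht' : 0 < INR t) by (apply lt_0_INR; lia).
  apply (Rmult_le_reg_r (6 * INR t)); [lra|].
  field_simplify; try lra.
Qed.
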